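(* Let $p:E\to B$ be a surjective morphism in $\mathbf{CLS}$ and $E'$ a closure space with the same underlying set as $E$ such that $1_E:E'\to E$ is a morphism in $\mathbf{CLS}$ and the first projection $\pi_1:E\times_BE'\to E'$, $(e,e')\mapsto e$, is a morphism in $\mathbf{CLS}$ (where $E\times_BE'$ is the pullback in $\mathbf{CLS}$ of $p$ and $p:E'\to B$). Write $p'$ for the map $p$ regarded as a morphism $E'\to B$. If both $p$ and $p'$ are regular epimorphisms in $\mathbf{CLS}$, then for every $Y\in\mathcal{C}_{E'}\setminus\mathcal{C}_E$ there exists $Y^*\in\mathcal{C}_{E'}\setminus\mathcal{C}_E$ with $Y\subsetneq Y^*$. In particular, if $\mathcal{C}_{E'}\neq\mathcal{C}_E$, then $E$ is infinite.
   Context: A closure space is a pair $(A,\mathcal{C}_A)$ where $A$ is a set and $\mathcal{C}_A$ is a set of subsets of $A$ closed under arbitrary intersections (so $A\in\mathcal{C}_A$); elements of $\mathcal{C}_A$ are called closed. The category $\mathbf{CLS}$ has closure spaces as objects and, as morphisms $\alpha:A\to B$, maps with $\alpha^{-1}(B')\in\mathcal{C}_A$ for all $B'\in\mathcal{C}_B$. Pullbacks in $\mathbf{CLS}$ are set-theoretic pullbacks with closed sets $\pi_1^{-1}(E_0)\cap\pi_2^{-1}(A_0)$ for $E_0,A_0$ closed in the factors. A morphism $q:E\to B$ in $\mathbf{CLS}$ is a regular epimorphism iff it is surjective and $\mathcal{C}_B=\{X\subseteq B\mid q^{-1}(X)\in\mathcal{C}_E\}$. *)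

(* Defs.v *)
From mathcomp Require Import all_boot.
From mathcomp Require Import boolp classical_sets cardinality.
Set Implicit Arguments.
Unset Strict Implicit.
Unset Printing Implicit Defensive.
Local Open Scope classical_set_scope.

(* A closure system on T: closed under arbitrary intersections
   (the empty intersection gives the whole set). *)
Definition closure_system (T : Type) (C : set (set T)) : Prop :=
  forall F : set (set T), F `<=` C -> C (\bigcap_(X in F) X).

Definition cls_morphism (A B : Type) (CA : set (set A)) (CB : set (set B))
  (f : A -> B) : Prop :=
  forall X, CB X -> CA (f @^-1` X).

(* Regular epimorphisms in CLS: surjective, and B carries the quotient closure. *)
Definition cls_regular_epi (A B : Type) (CA : set (set A)) (CB : set (set B))
  (q : A -> B) : Prop :=
  (forall b, exists a, q a = b) /\ CB = [set X | CA (q @^-1` X)].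

Definition pb_carrier (A A' C : Type) (f : A -> C) (g : A' -> C) : Type :=
  {z : A * A' | f z.1 = g z.2}.

Definition pb_closed (A A' C : Type) (CA : set (set A)) (CA' : set (set A'))
  (f : A -> C) (g : A' -> C) : set (set (pb_carrier f g)) :=
  [set S | exists X0 X1, CA X0 /\ CA' X1 /\
     S = [set z : pb_carrier f g | X0 (sval z).1 /\ X1 (sval z).2]].

Definition pb_pr1 (A A' C : Type) (f : A -> C) (g : A' -> C)
  (z : pb_carrier f g) : A := (sval z).1.
Arguments pb_closed {A A' C} CA CA' f g.
Arguments pb_pr1 {A A' C} f g z.

(* Main.v *)
Require Import Defs.
From mathcomp Require Import all_boot.
From mathcomp Require Import boolp classical_sets cardinality.
From mathcomp Require Import functions.
Local Open Scope classical_set_scope.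

Section Aux.
Variables (E B : Type) (CE CE' : set (set E)) (CB : set (set B)) (p : E -> B).

Lemma part1 :
  closure_system CE ->
  cls_morphism CE CB p ->
  cls_morphism (pb_closed CE CE' p p) CE' (pb_pr1 p p) ->
  cls_regular_epi CE' CB p ->
  (forall Y, CE' Y -> ~ CE Y ->
     exists Ys, CE' Ys /\ ~ CE Ys /\ Y `<` Ys).
Proof.
move=> clE mp mpr [_ reg'] Y HY nY.
have [X0 [X1 [H0 [H1 EQ]]]] := mpr Y HY.
have key : forall e e' (h : p e = p e'), Y e <-> X0 e /\ X1 e'.
  move=> e e' h.
  have := congr1 (fun S => S (exist _ (e, e') h)) EQ.
  by rewrite /= /pb_pr1 /= => ->.
exists X1; split => //; split.
  move=> CX1; apply: nY.
  have -> : Y = \bigcap_(X in [set X | X = X0 \/ X = X1]) X.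
    apply/seteqP; split => [e Ye X [->|->]|e He].
    - by have [] := (key e e erefl).1 Ye.
    - by have [] := (key e e erefl).1 Ye.
    - by apply/(key e e erefl).2; split; apply: He; [left|right].
  by apply: clE => X [->|->].
split.
  by move=> e Ye; have [] := (key e e erefl).1 Ye.
move=> X1Y; apply: nY.
have sat : forall e e', Y e -> p e = p e' -> Y e'.
  move=> e e' Ye h; apply: X1Y; have [] := (key e e' h).1 Ye => _ //.
have eqY : p @^-1` (p @` Y) = Y.
  apply/seteqP; split => [e [y Yy h]|e Ye]; last by exists e.
  exact: sat Yy h.
have : CB (p @` Y) by rewrite reg' /= eqY.
by move/mp; rewrite eqY.
Qed.

End Aux.

Theorem lemma4p2 (E B : Type) (CE CE' : set (set E)) (CB : set (set B))
  (p : E -> B) :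
  closure_system CE -> closure_system CE' -> closure_system CB ->
  cls_morphism CE CB p ->
  (forall b, exists e, p e = b) ->
  cls_morphism CE' CE id ->
  cls_morphism (pb_closed CE CE' p p) CE' (pb_pr1 p p) ->
  cls_regular_epi CE CB p ->
  cls_regular_epi CE' CB p ->
  (forall Y, CE' Y -> ~ CE Y ->
     exists Ys, CE' Ys /\ ~ CE Ys /\ Y `<` Ys) /\
  (CE' <> CE -> infinite_set [set: E]).
Proof.
move=> clE clE' clB mp surj mid mpr reg reg'.
have P1 := @part1 E B CE CE' CB p clE mp mpr reg'.
split => // neq.
have [Y0 [HY0 nY0]] : exists Y, CE' Y /\ ~ CE Y.
  apply: contrapT => nex; apply: neq.
  apply/funext => X; apply/propext; split => [HX|HX]; last exact: (mid X HX).
  apply: contrapT => nX; apply: nex; by exists X.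
have step : forall Y, exists Ys, (CE' Y /\ ~ CE Y) -> (CE' Ys /\ ~ CE Ys /\ Y `<` Ys).
  move=> Y; case: (pselect (CE' Y /\ ~ CE Y)) => [[h1 h2]|h].
    by have [Ys HYs] := P1 Y h1 h2; exists Ys.
  by exists Y.
have [nxt Hn] := choice step.
pose f n := iter n nxt Y0.
have cls : forall n, CE' (f n) /\ ~ CE (f n).
  elim => [|n IH] //=; by have [? [? _]] := Hn _ IH.
have prop : forall n, f n `<` f n.+1.
  by move=> n; have [_ [_ ?]] := Hn _ (cls n).
have mono : forall n m, (n <= m)%N -> f n `<=` f m.
  move=> n m /subnK <-; elim: (m - n)%N => [|k IH] //.
  rewrite addSn; apply: subset_trans IH _; exact: (prop _).1.
have xs : forall n, exists x, f n.+1 x /\ ~ f n x.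
  move=> n; have [_ nsub] := prop n.
  apply: contrapT => nex; apply: nsub => x fx.
  apply: contrapT => nfx; apply: nex; by exists x.
have [x Hx] := choice xs.
apply/infiniteP.
have [g] : $|{injfun [set: nat] >-> [set: E]}|.
  apply/injfunPex; exists x => // n m _ _ exy.
  wlog lt : n m exy / (n < m)%N.
    move=> W; case: (ltngtP n m) => [h|h|//]; first exact: W.
    by apply/esym; apply: W.
  exfalso; have [h1 _] := Hx n; have [_ h2] := Hx m.
  by apply: h2; rewrite -exy; apply: (mono n.+1 m lt).
exact: inj_card_le g.
Qed.
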